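(* $\displaystyle\lim_{\alpha\to+\infty}\tilde\theta_\alpha=\frac\pi4.$
   Context: For $\alpha>0$ and $\theta\in\mathbb{R}$ set $C_{\alpha,\theta}=\frac{\sin(2\theta)}{2\alpha}$ and $P_{\alpha,\theta}(x)=\alpha^2+\cos(2\theta)x^2-C_{\alpha,\theta}^2x^4$. Let $\theta^+_\alpha=\pi/2$ if $\alpha>1$, and $\theta^+_\alpha=\frac12\arccos(1-2\alpha^2)$ if $\alpha\le1$. Define $$L(\alpha,\theta)=\int_{-1}^1\frac{2\alpha C_{\alpha,\theta}^2x^2-\alpha\cos(2\theta)+C_{\alpha,\theta}^2x^2\sqrt{P_{\alpha,\theta}(x)}}{\sqrt{(1-x^2)P_{\alpha,\theta}(x)}\,\big(\alpha+\sqrt{P_{\alpha,\theta}(x)}\big)}\,dx.$$ For each $\alpha>0$, $\tilde\theta_\alpha$ denotes the unique $\theta\in(0,\theta^+_\alpha)\cap(0,\pi/4)$ with $L(\alpha,\theta)=0$. *)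

(* Defs.v *)
From mathcomp Require Import all_boot all_order all_algebra.
From mathcomp Require Import all_classical all_reals all_analysis.
Set Implicit Arguments. Unset Strict Implicit. Unset Printing Implicit Defensive.
Import Order.TTheory GRing.Theory Num.Theory.
Import numFieldNormedType.Exports.
Local Open Scope classical_set_scope.
Local Open Scope ring_scope.

Section Defs.
Variable R : realType.

Definition Cat (a t : R) : R := sin (2 * t) / (2 * a).

Definition Pat (a t x : R) : R :=
  a ^+ 2 + cos (2 * t) * x ^+ 2 - (Cat a t) ^+ 2 * x ^+ 4.

Definition theta_plus (a : R) : R :=
  if 1 < a then pi / 2 else acos (1 - 2 * a ^+ 2) / 2.

Definition L_integrand (a t x : R) : R :=
  (2 * a * (Cat a t) ^+ 2 * x ^+ 2 - a * cos (2 * t)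
     + (Cat a t) ^+ 2 * x ^+ 2 * Num.sqrt (Pat a t x))
  / (Num.sqrt ((1 - x ^+ 2) * Pat a t x) * (a + Num.sqrt (Pat a t x))).

(* L(alpha, theta) = \int_{-1}^{1} integrand dx  (Lebesgue integral on [-1,1];
   the integrand is absolutely integrable for the admissible parameters) *)
Definition L (a t : R) : R :=
  Rintegral lebesgue_measure `[-1, 1]%classic (L_integrand a t).

End Defs.

(* Main.v *)
Require Import Defs.
From mathcomp Require Import all_boot all_order all_algebra.
From mathcomp Require Import all_classical all_reals all_analysis.
From mathcomp Require Import ring lra.
From mathcomp Require Import measurable_realfun.
Set Implicit Arguments. Unset Strict Implicit. Unset Printing Implicit Defensive.
Import Order.TTheory GRing.Theory Num.Theory.
Import numFieldNormedType.Exports.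
Local Open Scope classical_set_scope.
Local Open Scope ring_scope.

Section S.
Variable R : realType.
Notation mu := (@lebesgue_measure R).

Definition I11 : set R := `]-1, 1[%classic.

Definition gg (x : R) : R := (Num.sqrt (1 - x ^+ 2))^-1.

Lemma sq_lt1 (x : R) : -1 < x < 1 -> 0 < 1 - x ^+ 2.
Proof. move=> /andP[h1 h2]; rewrite subr_gt0; nra. Qed.

Lemma gg_cont (x : R) : -1 < x < 1 -> {for x, continuous gg}.
Proof.
move=> hx; have h := sq_lt1 hx.
apply: continuousV; first by rewrite sqrtr_eq0 -ltNge.
apply: (@continuous_comp _ _ _ (fun y : R => 1 - y ^+ 2) (@Num.sqrt R)).
  apply: continuousB; first exact: cvg_cst.
  exact: exprn_continuous.
exact: sqrt_continuous.
Qed.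

Lemma gg_int_cc (c d : R) : -1 < c -> c < d -> d < 1 ->
  (\int[mu]_(x in `[c, d]) (gg x)%:E = (asin d - asin c)%:E)%E.
Proof.
move=> c1 cd d1.
rewrite EFinB; apply: continuous_FTC2 => //.
- apply: continuous_in_subspaceT => x; rewrite inE /= in_itv /= => /andP[cx xd].
  apply: gg_cont; apply/andP; split; [exact: lt_le_trans cx|exact: le_lt_trans d1].
- split.
  + move=> x; rewrite in_itv /= => /andP[cx xd].
    have hx : -1 < x < 1 by rewrite (lt_trans c1 cx) (lt_trans xd d1).
    by have := is_derive1_asin hx => /@ex_derive.
  + apply: cvg_at_right_filter; apply: continuous_asin.
    by rewrite c1 (lt_trans cd d1).
  + apply: cvg_at_left_filter; apply: continuous_asin.
    by rewrite d1 (lt_trans c1 cd).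
- move=> x; rewrite in_itv /= => /andP[cx xd].
  have hx : -1 < x < 1 by rewrite (lt_trans c1 cx) (lt_trans xd d1).
  rewrite derive1E; have := is_derive1_asin hx => /@derive_val ->.
  by [].
Qed.

Definition Fs (n : nat) : set R := `[-1 + (n.+2%:R)^-1, 1 - (n.+2%:R)^-1]%classic.

Lemma r_bnd (n : nat) : 0 < (n.+2%:R : R)^-1.
Proof. by rewrite invr_gt0 ltr0n. Qed.

Lemma Fs_nd : {homo Fs : n m / (n <= m)%N >-> (n <= m)%O}.
Proof.
move=> n m nm; rewrite subsetEset /Fs; apply: subset_itv; rewrite bnd_simp.
- rewrite lerD2l lef_pV2 ?posrE ?ltr0n // ler_nat; by rewrite ltnS ltnS.
- rewrite lerD2l lerN2 lef_pV2 ?posrE ?ltr0n // ler_nat; by rewrite ltnS ltnS.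
Qed.

Lemma Fs_cup : \bigcup_n Fs n = `]-1, 1[%classic.
Proof.
apply/seteqP; split.
- move=> x [n _]; rewrite /Fs /= !in_itv /= => /andP[h1 h2].
  have := r_bnd n => r0.
  move: h1 h2 r0; set r := (n.+2%:R)^-1 => h1 h2 r0; apply/andP; split; lra.
- move=> x; rewrite /= in_itv /= => /andP[h1 h2].
  set e := Num.min (1 + x) (1 - x).
  have e0 : 0 < e by rewrite lt_min; apply/andP; split; lra.
  exists (Num.truncn (e^-1)); first by [].
  have := truncnS_gt (e^-1) => he.
  have hr : ((Num.truncn (e^-1)).+2%:R : R)^-1 <= e.
    rewrite -[X in _ <= X]invrK lef_pV2 ?posrE ?ltr0n ?invr_gt0 //.
    apply: (le_trans (ltW he)); rewrite ler_nat; exact: leqnSn.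
  have : e <= 1 + x by rewrite ge_min lexx.
  have : e <= 1 - x by rewrite ge_min lexx orbT.
  rewrite /Fs /= in_itv /=; move: hr.
  set r := ((Num.truncn e^-1).+2%:R)^-1 => hr ? ?; apply/andP; split; lra.
Qed.

Lemma gg_ge0 x : 0 <= gg x.
Proof. by rewrite /gg invr_ge0 sqrtr_ge0. Qed.

Lemma gg_meas : measurable_fun (`]-1, 1[%classic : set R) gg.
Proof.
apply: open_continuous_measurable_fun; first exact: interval_open.
by move=> x; rewrite inE /= in_itv /= => hx; apply: gg_cont.
Qed.

Lemma Fs_sub n : Fs n `<=` `]-1, 1[%classic.
Proof. by rewrite -Fs_cup; exact: bigcup_sup. Qed.

Lemma gg_int_le : (\int[mu]_(x in I11) (gg x)%:E <= pi%:E)%E.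
Proof.
have H := @ge0_nondecreasing_set_cvg_integral _ (measurableTypeR R) R Fs (EFin \o gg) mu Fs_nd
  (fun n => measurable_itv _)
  (fun n => measurable_funS (measurable_itv _) (@Fs_sub n) (proj2 (measurable_EFinP _ _) gg_meas))
  (fun n x _ => gg_ge0 x).
rewrite Fs_cup in H.
rewrite -(cvg_lim _ H) //; apply: lime_le; first by apply/cvg_ex; eexists; exact: H.
apply: nearW => n /=.
have r0 := r_bnd n; move: r0; set r := (n.+2%:R)^-1 => r0.
have r1 : r < 1 by rewrite /r invf_lt1 ?ltr0n // ltr1n.
rewrite /Fs -/r gg_int_cc; [|lra|lra|lra].
rewrite lee_fin.
have h1 : asin (1 - r) <= pi / 2 by apply: asin_lepi2; apply/andP; split; lra.
have h2 : - (pi / 2) <= asin (-1 + r) by apply: asin_geNpi2; apply/andP; split; lra.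
lra.
Qed.

Lemma alg1 (a c K x2 q : R) : 1 <= a -> 0 <= c <= 1 -> 0 <= K -> K * (4 * a ^+ 2) <= 1 ->
  0 <= x2 < 1 -> 0 <= q -> q ^+ 2 = a ^+ 2 + c * x2 - K * x2 ->
  [/\ a / 2 <= q, q <= a + 1, a * (2 * a * K - a * c + K * q) <= 1 - a ^+ 2 * c
    & `|2 * a * K - a * c + K * q| <= a].
Proof.
move=> a1 /andP[c0 c1] K0 K1 /andP[x0 x1] q0 hq.
have a0 : 0 < a by lra.
have a2 : 1 <= a ^+ 2 by nra.
have Ka : K <= 1/4.
  have : 0 <= K * (a ^+ 2 - 1) by apply: mulr_ge0; lra.
  nra.
have P1 : a ^+ 2 / 4 <= q ^+ 2 by nra.
have P2 : q ^+ 2 <= (a + 1) ^+ 2 by nra.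
have hq1 : a / 2 <= q by nra.
have hq2 : q <= a + 1 by nra.
have h3 : a * (2 * a * K - a * c + K * q) <= 1 - a ^+ 2 * c.
  have : a * K * q <= a * K * (a + 1) by apply: ler_wpM2l; nra.
  nra.
split => //.
rewrite ler_norml; apply/andP; split.
- have : 0 <= K * q by nra.
  nra.
- have : a * (2 * a * K - a * c + K * q) <= 1 by nra.
  nra.
Qed.

Lemma f_bounds (a t x : R) : 1 <= a -> 0 <= cos (2 * t) -> -1 < x < 1 ->
  `|L_integrand a t x| <= 2 * gg x /\
  (2 / a ^+ 2 <= cos (2 * t) -> L_integrand a t x <= - (a * ((a + 1) * (2 * a + 1)))^-1).
Proof.
move=> a1 c0 hx.
have a0 : 0 < a by lra.
have hw := sq_lt1 hx.
have c1 : cos (2 * t) <= 1 by rewrite cos_le1.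
have s2 : sin (2 * t) ^+ 2 <= 1.
  have := sin_le1 (2 * t); have := sin_geN1 (2 * t); nra.
set K := Cat a t ^+ 2 * x ^+ 2.
have K0 : 0 <= K by rewrite /K mulr_ge0 // sqr_ge0.
have x2 : 0 <= x ^+ 2 < 1 by rewrite sqr_ge0 /=; lra.
have /andP[x20 x21] := x2.
have K1 : K * (4 * a ^+ 2) <= 1.
  have -> : K * (4 * a ^+ 2) = sin (2 * t) ^+ 2 * x ^+ 2.
    by rewrite /K /Cat; field; lra.
  nra.
have hP : Pat a t x = a ^+ 2 + cos (2 * t) * x ^+ 2 - K * x ^+ 2.
  by rewrite /Pat /K; ring.
have P0 : 0 <= Pat a t x.
  rewrite hP.
  have a2 : 1 <= a ^+ 2 by nra.
  have : 0 <= K * (a ^+ 2 - 1) by apply: mulr_ge0; lra.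
  have : 0 <= K * (1 - x ^+ 2) by apply: mulr_ge0; lra.
  have : 0 <= cos (2 * t) * x ^+ 2 by apply: mulr_ge0.
  move=> *; nra.
set q := Num.sqrt (Pat a t x).
have q0 : 0 <= q by exact: sqrtr_ge0.
have hq : q ^+ 2 = a ^+ 2 + cos (2 * t) * x ^+ 2 - K * x ^+ 2 by rewrite /q sqr_sqrtr // hP.
have [qa1 qa2 hN1 hN2] := alg1 a1 (introT andP (conj c0 c1)) K0 K1 x2 q0 hq.
set w := Num.sqrt (1 - x ^+ 2).
have w0 : 0 < w by rewrite /w sqrtr_gt0.
have w1 : w <= 1.
  have : w ^+ 2 = 1 - x ^+ 2 by rewrite /w sqr_sqrtr // ltW.
  nra.
set N := 2 * a * K - a * cos (2 * t) + K * q.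
have hf : L_integrand a t x = N / (w * (q * (a + q))).
  rewrite /L_integrand sqrtrM ?(ltW hw) // -/q -/w /N /K; congr (_ / _); ring.
have qpos : 0 < q by lra.
have M0 : 0 < q * (a + q) by apply: mulr_gt0; lra.
have D0 : 0 < w * (q * (a + q)) by exact: mulr_gt0.
split.
- rewrite hf normrM normfV (gtr0_norm D0) /gg -/w.
  rewrite ler_pdivrMr //.
  have -> : 2 / w * (w * (q * (a + q))) = 2 * (q * (a + q)) by field; lra.
  have : a <= 2 * (q * (a + q)) by nra.
  lra.
- move=> hc.
  have hc2 : 2 <= a ^+ 2 * cos (2 * t).
    by move: hc; rewrite ler_pdivrMr ?exprn_gt0 // mulrC.
  set k := (a * ((a + 1) * (2 * a + 1)))^-1.
  have k0 : 0 < k by rewrite /k invr_gt0; apply: mulr_gt0 => //; apply: mulr_gt0; lra.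
  have hk : k * (a * ((a + 1) * (2 * a + 1))) = 1 by rewrite /k mulVf // gt_eqF //; apply: mulr_gt0 => //; apply: mulr_gt0; lra.
  have hD : w * (q * (a + q)) <= (a + 1) * (2 * a + 1).
    have : q * (a + q) <= (a + 1) * (2 * a + 1) by nra.
    nra.
  rewrite hf ler_pdivrMr //.
  have h1 : k * (w * (q * (a + q))) <= k * ((a + 1) * (2 * a + 1)) by apply: ler_wpM2l; lra.
  have h2 : a * (k * (w * (q * (a + q)))) <= a * (k * ((a + 1) * (2 * a + 1))) by apply: ler_wpM2l; lra.
  have h3 : a * (k * ((a + 1) * (2 * a + 1))) = 1 by rewrite mulrCA hk.
  have h4 : a * (N + k * (w * (q * (a + q)))) <= 0 by rewrite mulrDr; rewrite /N in hN1 *; lra.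
  have h5 : N + k * (w * (q * (a + q))) <= 0.
    by move: h4; rewrite pmulr_rle0.
  lra.
Qed.

Lemma Pat_pos (a t x : R) : 1 <= a -> 0 <= cos (2 * t) -> -1 < x < 1 -> 0 < Pat a t x.
Proof.
move=> a1 c0 hx.
have a0 : 0 < a by lra.
have s2 : sin (2 * t) ^+ 2 <= 1.
  have := sin_le1 (2 * t); have := sin_geN1 (2 * t); nra.
set K := Cat a t ^+ 2 * x ^+ 2.
have K0 : 0 <= K by rewrite /K mulr_ge0 // sqr_ge0.
have hw := sq_lt1 hx.
have x2 : 0 <= x ^+ 2 < 1 by rewrite sqr_ge0 /=; lra.
have /andP[x20 x21] := x2.
have K1 : K * (4 * a ^+ 2) <= 1.
  have -> : K * (4 * a ^+ 2) = sin (2 * t) ^+ 2 * x ^+ 2.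
    by rewrite /K /Cat; field; lra.
  nra.
have -> : Pat a t x = a ^+ 2 + cos (2 * t) * x ^+ 2 - K * x ^+ 2.
  by rewrite /Pat /K; ring.
have a2 : 1 <= a ^+ 2 by nra.
have : 0 <= K * (a ^+ 2 - 1) by apply: mulr_ge0; lra.
have : 0 <= K * (1 - x ^+ 2) by apply: mulr_ge0; lra.
have : 0 <= cos (2 * t) * x ^+ 2 by apply: mulr_ge0.
move=> *; nra.
Qed.

Lemma Pat_cont (a t x : R) : {for x, continuous (Pat a t)}.
Proof.
rewrite /Pat.
apply: continuousB; [apply: continuousD; [exact: cvg_cst | apply: continuousM; [exact: cvg_cst | exact: exprn_continuous]] | apply: continuousM; [exact: cvg_cst| exact: exprn_continuous]].
Qed.

Lemma Li_cont (a t x : R) : 1 <= a -> 0 <= cos (2 * t) -> -1 < x < 1 ->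
  {for x, continuous (L_integrand a t)}.
Proof.
move=> a1 c0 hx.
have P0 := Pat_pos a1 c0 hx.
have w0 := sq_lt1 hx.
have sP : {for x, continuous (fun y => Num.sqrt (Pat a t y))}.
  apply: (@continuous_comp _ _ _ (Pat a t) (@Num.sqrt R)); first exact: Pat_cont.
  exact: sqrt_continuous.
rewrite /L_integrand.
apply: continuousM.
  apply: continuousD.
    apply: continuousB.
      apply: continuousM; [exact: cvg_cst | exact: exprn_continuous].
    exact: cvg_cst.
  apply: continuousM => //.
  apply: continuousM; [exact: cvg_cst | exact: exprn_continuous].
apply: continuousV.
  rewrite mulf_neq0 //.
    by rewrite gt_eqF // sqrtr_gt0 mulr_gt0.
  by rewrite gt_eqF // ltr_pwDl ?sqrtr_ge0 //; lra.
apply: continuousM.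
  have h : {for x, continuous (fun y : R => (1 - y ^+ 2) * Pat a t y)}.
    apply: continuousM; last exact: Pat_cont.
    apply: continuousB; [exact: cvg_cst | exact: exprn_continuous].
  apply: (@continuous_comp _ _ _ (fun y : R => (1 - y ^+ 2) * Pat a t y) (@Num.sqrt R)); first exact: h.
  exact: sqrt_continuous.
apply: continuousD => //; exact: cvg_cst.
Qed.

Lemma mI11 : measurable I11.
Proof. exact: measurable_itv. Qed.

Lemma muI11 : mu I11 = 2%:E.
Proof.
rewrite /I11 lebesgue_measure_itv /= lte_fin ifT; last lra.
by rewrite opprK -EFinD.
Qed.

Lemma gg_integrable : mu.-integrable I11 (EFin \o gg).
Proof.
apply/integrableP; split; first by apply/measurable_EFinP; exact: gg_meas.
have -> : (\int[mu]_(x in I11) `|(EFin \o gg) x| = \int[mu]_(x in I11) (gg x)%:E)%E.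
  by apply: eq_integral => x _; rewrite /comp abse_EFin ger0_norm ?gg_ge0.
exact: (le_lt_trans gg_int_le (ltry _)).
Qed.

Lemma cst_integrable (k : R) : mu.-integrable I11 (EFin \o cst k).
Proof.
apply/integrableP; split; first by apply/measurable_EFinP; exact: measurable_cst.
have -> : (\int[mu]_(x in I11) `|(EFin \o cst k) x| = \int[mu]_(x in I11) (cst (`|k|%:E) x))%E.
  by apply: eq_integral => x _; rewrite /comp abse_EFin.
rewrite integral_cst; last exact: mI11.
by rewrite -[X in (_ * X)%E]/(mu I11) muI11 -EFinM ltry.
Qed.

Lemma Li_integrable (a t : R) : 1 <= a -> 0 <= cos (2 * t) ->
  mu.-integrable I11 (EFin \o L_integrand a t).
Proof.
move=> a1 c0.
have mf : measurable_fun I11 (L_integrand a t).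
  apply: open_continuous_measurable_fun; first exact: interval_open.
  by move=> x; rewrite /I11 inE /= in_itv /= => hx; apply: Li_cont.
have gi : mu.-integrable I11 (fun x => 2%:E * (EFin \o gg) x)%E.
  apply: integrableZl; [exact: mI11 | exact: gg_integrable].
refine (@le_integrable _ _ _ mu I11 mI11 (EFin \o L_integrand a t) (fun x => 2%:E * (EFin \o gg) x)%E _ _ gi).
- by apply/measurable_EFinP.
- move=> x; rewrite /I11 /= in_itv /= => hx.
  have [h _] := f_bounds a1 c0 hx.
  by rewrite lee_fin; apply: (le_trans h); exact: ler_norm.
Qed.

Lemma L_neg (a t : R) : 1 <= a -> 0 <= cos (2 * t) -> 2 / a ^+ 2 <= cos (2 * t) ->
  L a t < 0.
Proof.
move=> a1 c0 hc.
have fi := Li_integrable a1 c0.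
have -> : L a t = \int[mu]_(x in I11) L_integrand a t x.
  rewrite /L /Rintegral /I11 integral_itv_bndoo //.
  by case/integrableP: fi.
set k := (a * ((a + 1) * (2 * a + 1)))^-1.
have k0 : 0 < k by rewrite /k invr_gt0; apply: mulr_gt0; [lra|apply: mulr_gt0; lra].
apply: (@le_lt_trans _ _ (\int[mu]_(x in I11) (cst (-k) x))).
  apply: le_Rintegral => //; first exact: mI11.
    exact: cst_integrable.
  move=> x; rewrite /I11 /= in_itv /= => hx.
  by have [_ h] := f_bounds a1 c0 hx; apply: h.
rewrite Rintegral_cst; last exact: mI11.
have -> : fine (mu I11) = 2 by rewrite muI11.
lra.
Qed.
End S.

Unset Implicit Arguments.

Lemma c_small (R : realType) (a th : R) : 1 <= a -> 0 < th -> th < pi / 4 -> L a th = 0 ->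
  0 < cos (2 * th) < 2 / a ^+ 2.
Proof.
move=> a1 t0 t1 hL.
have p0 : 0 < pi :> R := pi_gt0 R.
have c0 : 0 < cos (2 * th) by apply: cos_gt0_pihalf; apply/andP; split; lra.
rewrite c0 /= ltNge; apply/negP => hc.
have := L_neg a1 (ltW c0) hc; rewrite hL; lra.
Qed.

Theorem lemma4p6 (R : realType) (thetat : R -> R) :
  (forall a : R, 0 < a ->
     [/\ 0 < thetat a, thetat a < theta_plus a, thetat a < pi / 4
       & L a (thetat a) = 0]) ->
  thetat a @[a --> +oo] --> pi / 4.
Proof.
move=> H.
have p0 : 0 < pi :> R := pi_gt0 R.
pose c a := cos (2 * thetat a).
have hc : c a @[a --> +oo] --> 0.
  apply/cvgrPdist_lt => e e0.
  near=> a.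
  have a1 : 1 <= a by apply: ltW; near: a; apply: nbhs_pinfty_gt; exact: num_real.
  have ae : 2 / e < a by near: a; apply: nbhs_pinfty_gt; exact: num_real.
  have [t0 _ t1 hL] := H a (lt_le_trans ltr01 a1).
  have /andP[c0 c1] := c_small R a (thetat a) a1 t0 t1 hL.
  rewrite sub0r normrN gtr0_norm //.
  apply: (lt_trans c1).
  have a2 : 0 < a ^+ 2 by rewrite exprn_gt0 //; lra.
  rewrite ltr_pdivrMr //.
  move: ae; rewrite ltr_pdivrMr // => ae.
  have : e * a <= e * a ^+ 2 by rewrite ler_wpM2l ?(ltW e0) // expr2 ler_peMl //; lra.
  lra.
have hA : acos (c a) @[a --> +oo] --> acos (0 : R).
  have hac : {for (0 : R), continuous acos}.
    by apply: continuous_acos; rewrite ltrN10 ltr01.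
  apply: cvg_comp; [exact: hc | exact: hac].
have hB : acos (c a) / 2 @[a --> +oo] --> acos (0 : R) / 2.
  by apply: cvgMr_tmp.
have e : acos (0 : R) / 2 = pi / 4.
  by rewrite acos0; field.
rewrite -e.
apply: cvg_trans hB.
apply: near_eq_cvg.
near=> a.
have a1 : 1 <= a by apply: ltW; near: a; apply: nbhs_pinfty_gt; exact: num_real.
have [t0 _ t1 hL] := H a (lt_le_trans ltr01 a1).
rewrite /c cosK; first by field.
rewrite in_itv /=; apply/andP; split; lra.
Unshelve. all: by end_near.
Qed.
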